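(* Consider the multi-round profit license game with horizon $T$, stage costs $C_1,\dots,C_T>0$ and menus $\mathcal{F}_1,\dots,\mathcal{F}_T$. (i) If $\mathcal{F}_t\subseteq\mathcal{E}$ for every $t=1,\dots,T$, then the multi-round contract is incentive-aligned: for every $\theta_0\in\Theta_0$ and every agent strategy, $\mathbb{E}_{\theta_0}[L+P-C]\le 0$. (ii) Conversely, if $\mathcal{F}_t\not\subseteq\mathcal{E}$ for some $t$, then there exist $\theta_0\in\Theta_0$ and an agent strategy with $\mathbb{E}_{\theta_0}[L+P-C]>0$, so the contract is not incentive-aligned.
   Context: Let $\Theta=\Theta_0\sqcup\Theta_1$ be a set of types (null and nonnull) and $(P_\theta)_{\theta\in\Theta}$ probability distributions on a measurable space $\mathcal{Z}$. An $e$-value is a measurable $g:\mathcal{Z}\to[0,\infty)$ with $\mathbb{E}_{Z\sim P_\theta}[g(Z)]\le 1$ for every $\theta\in\Theta_0$; $\mathcal{E}$ is the set of $e$-values. Multi-round profit license game for an agent of type $\theta$: fix $T\ge1$, costs $C_1,\dots,C_T>0$, and menus $\mathcal{F}_1,\dots,\mathcal{F}_T$ of measurable functions $\mathcal{Z}\to[0,\infty)$. Set $L(0)=0$. For $t=1,\dots,T$: the agent chooses a withdrawal $P(t)\in[0,L(t-1)]$ and an indicator $I_t\in\{0,1\}$. If $I_t=1$, the agent pays $C_t$, chooses $f_t\in\mathcal{F}_t$, a fresh observation $Z_t\sim P_\theta$ independent of everything before is drawn, and $L(t)=(L(t-1)+C_t-P(t))\,f_t(Z_t)$. If $I_t=0$,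 $L(t)=L(t-1)-P(t)$. An agent strategy specifies $P(t)$, $I_t$ and $f_t$ as (measurable) functions of the history $(P(s),I_s,f_s,Z_s)_{s<t}$. The totals are $L=L(T)$, $P=\sum_{t=1}^T P(t)$ and $C=\sum_{t=1}^T C_tI_t$; $\mathbb{E}_\theta$ denotes expectation when the agent has type $\theta$. The multi-round contract is incentive-aligned if $\mathbb{E}_{\theta_0}[L+P-C]\le 0$ for every $\theta_0\in\Theta_0$ and every agent strategy. *)

(* Defs.v *)
From HB Require Import structures.
From mathcomp Require Import all_boot all_order all_algebra.
From mathcomp Require Import all_classical all_reals all_analysis.
Set Implicit Arguments. Unset Strict Implicit. Unset Printing Implicit Defensive.
Import Order.TTheory GRing.Theory Num.Theory.
Local Open Scope classical_set_scope.
Local Open Scope ring_scope.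

Section ProfitLicense.
Context (d : measure_display) (Z : measurableType d) (R : realType).
Context (Theta : Type) (Theta0 : set Theta) (Pr : Theta -> probability Z R).

Definition evalue (g : Z -> R) : Prop :=
  [/\ measurable_fun setT g, (forall z, 0 <= g z) &
      forall th, Theta0 th -> (\int[Pr th]_z (g z)%:E <= 1)%E].

(* The argument [t] is the round (1-based),
   the argument [obs : seq Z] is the list of observations Z_s drawn so far
   (only in rounds s < t with I_s = 1, in order).  Since P(s), I_s, f_s for
   s < t are themselves functions of earlier observations, this is exactly
   the information in the history (P(s), I_s, f_s, Z_s)_{s<t}.
   wd t obs = P(t), play t obs = I_t, pick t obs = f_t. *)
Record strategy := Strategy {
  wd : nat -> seq Z -> R;
  play : nat -> seq Z -> bool;
  pick : nat -> seq Z -> Z -> R }.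

Definition strategy_measurable (S : strategy) : Prop :=
  forall (t k : nat),
    [/\ measurable_fun setT (fun x : k.-tuple Z => wd S t (tval x)),
        measurable_fun setT (fun x : k.-tuple Z => play S t (tval x)) &
        measurable_fun setT (fun xz : k.-tuple Z * Z => pick S t (tval xz.1) xz.2)].

Context (C : nat -> R) (F : nat -> set (Z -> R)).

(* Feasibility along every reachable history: P(t) in [0, L(t-1)], and
   f_t in F_t whenever I_t = 1.  [n] = number of remaining rounds,
   [t] = current round, [L] = L(t-1). *)
Fixpoint feasible (S : strategy) (n t : nat) (obs : seq Z) (L : R) : Prop :=
  match n with
  | 0 => True
  | n'.+1 =>
    let p := wd S t obs in
    (0 <= p <= L) /\
    (if play S t obs then
       F t (pick S t obs) /\
       forall z, feasible S n' t.+1 (rcons obs z) ((L + C t - p) * pick S t obs z)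
     else feasible S n' t.+1 obs (L - p))
  end.

(* Expectation E_theta[phi(L, P, C)] of a nonnegative terminal quantity,
   computed by integrating out each fresh observation Z_t ~ P_theta
   (independent of the past) at the round where it is drawn.
   [L] = L(t-1), [Pa] = sum_{s<t} P(s), [Ca] = sum_{s<t} C_s I_s. *)
Fixpoint gameE (phi : R -> R -> R -> R) (th : Theta) (S : strategy)
    (n t : nat) (obs : seq Z) (L Pa Ca : R) : \bar R :=
  match n with
  | 0 => (phi L Pa Ca)%:E
  | n'.+1 =>
    let p := wd S t obs in
    if play S t obs then
      (\int[Pr th]_z gameE phi th S n' t.+1 (rcons obs z)
          ((L + C t - p) * pick S t obs z)%R (Pa + p)%R (Ca + C t)%R)%E
    else gameE phi th S n' t.+1 obs (L - p) (Pa + p) Ca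
  end.

Definition admissible (T : nat) (S : strategy) : Prop :=
  strategy_measurable S /\ feasible S T 1 [::] 0.

(* E_theta[L + P - C] = E_theta[L + P] - E_theta[C]  (C is bounded, L + P >= 0) *)
Definition expected_gain (T : nat) (th : Theta) (S : strategy) : \bar R :=
  (gameE (fun L Pa _ => (L + Pa)%R) th S T 1 [::] 0%R 0%R 0%R
   - gameE (fun _ _ Ca => Ca) th S T 1 [::] 0%R 0%R 0%R)%E.

End ProfitLicense.

(* Main.v *)
Require Import Defs.
From HB Require Import structures.
From mathcomp Require Import all_boot all_order all_algebra.
From mathcomp Require Import all_classical all_reals all_analysis.
From mathcomp Require Import measurable_realfun.
From mathcomp Require Import lra.
Import Order.TTheory GRing.Theory Num.Theory.
Local Open Scope classical_set_scope.
Local Open Scope ring_scope.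

Section PB1.
Context (d : measure_display) (Z : measurableType d) (R : realType).

Lemma meas_param_int d' (X : measurableType d') (P : probability Z R)
  (h : X * Z -> \bar R) : measurable_fun setT h ->
  measurable_fun setT (fun x => \int[P]_y h (x, y))%E.
Proof.
move=> mh.
rewrite (_ : (fun x => _) = (fun x => fubini_F P h^\+ x - fubini_F P h^\- x)%E); last first.
  apply: funext => x; rewrite integralE /fubini_F.
  by rewrite /fubini_F; congr (_ - _)%E; apply: eq_integral => y _; rewrite ?funeposE ?funenegE.
have h1 : measurable_fun setT (fubini_F P (h^\+)%E).
  apply: measurable_fun_fubini_tonelli_F; first exact: measurable_funepos.
  by move=> x; exact: funepos_ge0.
have h2 : measurable_fun setT (fubini_F P (h^\-)%E).
  apply: measurable_fun_fubini_tonelli_F; first exact: measurable_funeneg.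
  by move=> x; exact: funeneg_ge0.
exact: (emeasurable_funB h1 h2).
Qed.
Lemma meas_rcons d' (X : measurableType d') k (o : X -> k.-tuple Z) :
  measurable_fun setT o ->
  measurable_fun setT (fun xz : X * Z => [tuple of rcons (o xz.1) xz.2]).
Proof.
move=> mo; apply/measurable_fun_tnthP => i /=.
have [ik|ik] := ltnP i k.
  rewrite (_ : _ \o _ = fun xz : X * Z => tnth (o xz.1) (Ordinal ik)).
    apply: (measurableT_comp (measurable_tnth _)).
    exact: measurableT_comp mo measurable_fst.
  apply/funext => xz /=; rewrite !(tnth_nth xz.2) /= nth_rcons size_tuple ik.
  by [].
rewrite (_ : _ \o _ = snd) //.
apply/funext => xz /=; rewrite (tnth_nth xz.2) /= nth_rcons size_tuple.
have -> : nat_of_ord i = k by apply/eqP; rewrite eqn_leq ik -ltnS ltn_ord.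
by rewrite ltnn eqxx.
Qed.


Section Game.
Context (Theta : Type) (Pr : Theta -> probability Z R) (C : nat -> R).

Lemma meas_game (phi : R -> R -> R -> R)
  (hphi : forall d' (X : measurableType d') (a b c : X -> R),
     measurable_fun setT a -> measurable_fun setT b -> measurable_fun setT c ->
     measurable_fun setT (fun x => phi (a x) (b x) (c x)))
  th (S : strategy Z R) (mS : strategy_measurable S) :
  forall n t k d' (X : measurableType d') (o : X -> k.-tuple Z) (L Pa Ca : X -> R),
  measurable_fun setT o -> measurable_fun setT L -> measurable_fun setT Pa ->
  measurable_fun setT Ca ->
  measurable_fun setT (fun x => gameE Pr C phi th S n t (tval (o x)) (L x) (Pa x) (Ca x)).
Proof.
elim=> [|n IH] t k d' X o L Pa Ca mo mL mPa mCa /=.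
  exact/measurable_EFinP/hphi.
have [mw mpl mpk] := mS t k.
have mp : measurable_fun setT (fun x => wd S t (tval (o x))) := measurableT_comp mw mo.
apply: measurable_fun_ifT.
- exact: measurableT_comp mpl mo.
- apply: (@meas_param_int _ X (Pr th) (fun xz => gameE Pr C phi th S n t.+1
     (tval [tuple of rcons (o xz.1) xz.2])
     ((L xz.1 + C t - wd S t (tval (o xz.1))) * Defs.pick S t (tval (o xz.1)) xz.2)
     (Pa xz.1 + wd S t (tval (o xz.1))) (Ca xz.1 + C t))).
  apply: (IH t.+1 k.+1 _ (X * Z)%type (fun xz => [tuple of rcons (o xz.1) xz.2])
     (fun xz => (L xz.1 + C t - wd S t (tval (o xz.1))) * Defs.pick S t (tval (o xz.1)) xz.2)
     (fun xz => Pa xz.1 + wd S t (tval (o xz.1))) (fun xz => Ca xz.1 + C t)).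
  + exact: meas_rcons.
  + apply: measurable_funM.
      apply: measurable_funB.
        apply: measurable_funD; last exact: measurable_cst.
        exact: measurableT_comp mL measurable_fst.
      exact: measurableT_comp mp measurable_fst.
    have mo1 : measurable_fun setT (fun xz : X * Z => o xz.1).
      exact: measurableT_comp mo measurable_fst.
    exact: (measurableT_comp mpk (measurable_fun_pair mo1 measurable_snd)).
  + apply: measurable_funD.
      exact: measurableT_comp mPa measurable_fst.
    exact: measurableT_comp mp measurable_fst.
  + apply: measurable_funD; last exact: measurable_cst.
    exact: measurableT_comp mCa measurable_fst.
- apply: (IH t.+1 k _ X o (fun x => L x - wd S t (tval (o x)))
     (fun x => Pa x + wd S t (tval (o x))) Ca) => //.
  + exact: measurable_funB.
  + exact: measurable_funD.
Qed.


Lemma int_addc (P : probability Z R) (g : Z -> \bar R) (c : R) :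
  (forall z, (0 <= g z)%E) -> measurable_fun setT g -> 0 <= c ->
  (\int[P]_z (g z + c%:E) = \int[P]_z g z + c%:E)%E.
Proof.
move=> g0 mg c0.
have g0' : forall z, setT z -> (0 <= g z)%E by move=> z _; exact: g0.
have c0' : forall z : Z, setT z -> (0 <= c%:E)%E by move=> z _; rewrite lee_fin.
rewrite ge0_integralD//.
congr (_ + _)%E.
rewrite (_ : (\int[P]_z c%:E = \int[P]_z cst c%:E z)%E)//.
rewrite integral_cst//.
rewrite [X in (_ * X)%E](_ : _ = 1%E) ?mule1 //; exact: probability_setT.
Qed.

Lemma meas_next (phi : R -> R -> R -> R)
  (hphi : forall d' (X : measurableType d') (a b c : X -> R),
     measurable_fun setT a -> measurable_fun setT b -> measurable_fun setT c ->
     measurable_fun setT (fun x => phi (a x) (b x) (c x)))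
  th (S : strategy Z R) (mS : strategy_measurable S) n t obs (a : R) (f : Z -> R) c e :
  measurable_fun setT f ->
  measurable_fun setT (fun z => gameE Pr C phi th S n t (rcons obs z) (a * f z) c e).
Proof.
move=> mf.
have mo : measurable_fun setT (fun z : Z => [tuple of rcons (in_tuple obs) z]).
  have H := @meas_rcons _ Z _ (fun _ : Z => in_tuple obs) (measurable_cst _).
  have H2 := (measurableT_comp H (@measurable_fun_pair _ _ _ Z Z Z (fun z => z) (fun z => z) (@measurable_id _ Z setT) (@measurable_id _ Z setT))).
  exact: H2.
have := (@meas_game phi hphi th S mS n t _ _ Z
   (fun z : Z => [tuple of rcons (in_tuple obs) z]) (fun z => a * f z) (cst c) (cst e) mo).
move=> H; apply: H.
- exact: measurable_funM.
- exact: measurable_cst.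
- exact: measurable_cst.
Qed.

End Game.

Section Main.
Context (Theta : Type) (Pr : Theta -> probability Z R) (C : nat -> R)
  (F : nat -> set (Z -> R)).

Definition goodC th n t := forall s, (t <= s < t + n)%N -> (0 < C s) /\
  (forall f, F s f -> [/\ measurable_fun setT f, (forall z, 0 <= f z) &
                        (\int[Pr th]_z (f z)%:E <= 1)%E]).

Definition phi1 : R -> R -> R -> R := fun L Pa _ => L + Pa.
Definition phi2 : R -> R -> R -> R := fun _ _ Ca => Ca.

Lemma hphi1 d' (X : measurableType d') (a b c : X -> R) :
  measurable_fun setT a -> measurable_fun setT b -> measurable_fun setT c ->
  measurable_fun setT (fun x => phi1 (a x) (b x) (c x)).
Proof. by move=> ma mb _; exact: measurable_funD. Qed.

Lemma hphi2 d' (X : measurableType d') (a b c : X -> R) :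
  measurable_fun setT a -> measurable_fun setT b -> measurable_fun setT c ->
  measurable_fun setT (fun x => phi2 (a x) (b x) (c x)).
Proof. by move=> _ _ mc. Qed.

Lemma ge0_game phi (hphi0 : forall a b c, 0 <= a -> 0 <= b -> 0 <= c -> 0 <= phi a b c)
  th (S : strategy Z R) :
  forall n t obs L Pa Ca, goodC th n t -> feasible C F S n t obs L ->
  0 <= L -> 0 <= Pa -> 0 <= Ca -> (0 <= gameE Pr C phi th S n t obs L Pa Ca)%E.
Proof.
elim=> [|n IH] t obs L Pa Ca hg /= hf L0 Pa0 Ca0.
  by rewrite lee_fin; exact: hphi0.
have ht : (t <= t < t + n.+1)%N by rewrite leqnn /= addnS ltnS leq_addr.
have [Ct fm] := hg t ht.
case: hf => /andP[p0 pL]; case: ifP => _.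
- move=> [Ff Hz]; apply: integral_ge0 => z _; apply: IH => //.
  + move=> s /andP[ts sn]; apply: hg; rewrite (ltnW ts) /=; by rewrite addnS -addSn.
  + have [_ f0' _] := fm _ Ff.
    apply: mulr_ge0 => //; lra.
  + lra.
  + lra.
- move=> H; apply: IH => //.
  + move=> s /andP[ts sn]; apply: hg; rewrite (ltnW ts) /=; by rewrite addnS -addSn.
  + lra.
  + lra.
Qed.


Lemma main_ineq th (S : strategy Z R) (mS : strategy_measurable S) :
  forall n t obs L Pa Ca, goodC th n t -> feasible C F S n t obs L ->
  0 <= L -> 0 <= Pa -> 0 <= Ca ->
  (gameE Pr C phi1 th S n t obs L Pa Ca + Ca%:E <=
   gameE Pr C phi2 th S n t obs L Pa Ca + (L + Pa)%:E)%E.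
Proof.
elim=> [|n IH] t obs L Pa Ca hg /= hf L0 Pa0 Ca0.
  by rewrite /phi1 /phi2 -!EFinD lee_fin addrC.
have ht : (t <= t < t + n.+1)%N by rewrite leqnn /= addnS ltnS leq_addr.
have [Ct fm] := hg t ht.
have hg' : goodC th n t.+1.
  by move=> s /andP[ts sn]; apply: hg; rewrite (ltnW ts) /=; rewrite addnS -addSn.
case: hf => /andP[p0 pL]; case: ifP => _.
- move=> [Ff Hz]; have [mf f0 f1] := fm _ Ff.
  set p := wd S t obs in p0 pL Hz *.
  set f := Defs.pick S t obs in Ff mf f0 f1 Hz *.
  set a := L + C t - p in Hz *.
  have a0 : 0 <= a by rewrite /a; lra.
  pose g1 z := gameE Pr C phi1 th S n t.+1 (rcons obs z) (a * f z) (Pa + p) (Ca + C t).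
  pose g2 z := gameE Pr C phi2 th S n t.+1 (rcons obs z) (a * f z) (Pa + p) (Ca + C t).
  have mg1 : measurable_fun setT g1 := @meas_next Theta Pr C phi1 hphi1 th S mS n t.+1 obs a f _ _ mf.
  have mg2 : measurable_fun setT g2 := @meas_next Theta Pr C phi2 hphi2 th S mS n t.+1 obs a f _ _ mf.
  have afz z : 0 <= a * f z by apply: mulr_ge0.
  have g10 z : (0 <= g1 z)%E.
    apply: ge0_game; [|exact: hg'|exact: Hz|exact: afz|lra|lra].
    by move=> ? ? ? ? ? ?; rewrite /phi1; lra.
  have g20 z : (0 <= g2 z)%E.
    apply: ge0_game; [|exact: hg'|exact: Hz|exact: afz|lra|lra].
    by move=> ? ? ? ? ? ?; rewrite /phi2; lra.
  have IHz z : (g1 z + (Ca + C t)%:E <= g2 z + (a * f z + (Pa + p))%:E)%E.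
    apply: IH => //; lra.
  have E1 : (\int[Pr th]_z g1 z + (Ca + C t)%:E = \int[Pr th]_z (g1 z + (Ca + C t)%:E))%E.
    by rewrite int_addc //; lra.
  have mf' : measurable_fun setT (fun z => (a * f z)%:E).
    by apply/measurable_EFinP; apply: measurable_funM.
  have E2 : (\int[Pr th]_z (g2 z + (a * f z + (Pa + p))%:E) =
      \int[Pr th]_z g2 z + (a%:E * \int[Pr th]_z (f z)%:E + (Pa + p)%:E))%E.
    have s1 : forall z, setT z -> (0 <= g2 z)%E by move=> z _; exact: g20.
    have s2 : forall z, setT z -> (0 <= (a * f z + (Pa + p))%:E)%E.
      by move=> z _; rewrite lee_fin; have := afz z; lra.
    have s3 : measurable_fun setT (fun z => (a * f z + (Pa + p))%:E).
      apply/measurable_EFinP; apply: measurable_funD => //.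
      exact: measurable_funM.
    rewrite ge0_integralD //.
    congr (_ + _)%E.
    transitivity (\int[Pr th]_z ((a * f z)%:E + (Pa + p)%:E))%E.
      by apply: eq_integral => z _; rewrite EFinD.
    rewrite int_addc //; last by lra.
    congr (_ + _)%E.
    under eq_integral do rewrite EFinM.
    rewrite ge0_integralZl_EFin //.
    - by move=> z _; rewrite lee_fin.
    - exact/measurable_EFinP.
  have le1 : (\int[Pr th]_z (g1 z + (Ca + C t)%:E) <=
              \int[Pr th]_z (g2 z + (a * f z + (Pa + p))%:E))%E.
    have t1 : forall z, setT z -> (0 <= g1 z + (Ca + C t)%:E)%E.
      by move=> z _; apply: adde_ge0 => //; rewrite lee_fin; lra.
    have t2 : measurable_fun setT (fun z => g1 z + (Ca + C t)%:E)%E.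
      by apply: emeasurable_funD => //; exact: measurable_cst.
    have t3 : measurable_fun setT (fun z => g2 z + (a * f z + (Pa + p))%:E)%E.
      apply: emeasurable_funD => //.
      apply/measurable_EFinP; apply: measurable_funD => //.
      exact: measurable_funM.
    apply: ge0_le_integral => //.
  have le2 : (a%:E * \int[Pr th]_z (f z)%:E <= a%:E)%E.
    by rewrite -[leRHS]mule1; apply: lee_wpmul2l => //; rewrite lee_fin.
  have fC : (C t)%:E \is a fin_num by [].
  rewrite -(leeD2rE _ _ fC).
  rewrite -addeA -EFinD -/g1 -/g2 E1.
  rewrite -addeA -EFinD (_ : L + Pa + C t = a + (Pa + p)); last by rewrite /a; lra.
  apply: (le_trans le1); rewrite E2 addeA (EFinD a (Pa + p)) addeA.
  by apply: leeD2r; apply: leeD2l.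
- move=> H.
  have := IH t.+1 obs (L - wd S t obs) (Pa + wd S t obs) Ca hg' H.
  rewrite (_ : L - wd S t obs + (Pa + wd S t obs) = L + Pa); last by lra.
  by apply; lra.
Qed.

End Main.

Section Second.
Context (Theta : Type) (Pr : Theta -> probability Z R) (C : nat -> R)
  (F : nat -> set (Z -> R)).
Variables (t0 : nat) (f : Z -> R).

Definition strat : strategy Z R :=
  Strategy (fun _ _ => 0) (fun t _ => t == t0) (fun _ _ => f).

Lemma feas_strat (Ct0 : 0 <= C t0) (Ff : F t0 f) (f0 : forall z, 0 <= f z) :
  forall n t obs L, 0 <= L -> feasible C F strat n t obs L.
Proof.
elim=> // n IH t obs L L0 /=; split; first by rewrite lexx L0.
case: eqP => [->|_].
  split => // z; apply: IH; apply: mulr_ge0 => //; lra.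
by apply: IH; lra.
Qed.

Lemma game_after phi th :
  forall n t obs L Pa Ca, (t0 < t)%N ->
  gameE Pr C phi th strat n t obs L Pa Ca = (phi L Pa Ca)%:E.
Proof.
elim=> // n IH t obs L Pa Ca ht /=.
have -> : (t == t0) = false by apply/negbTE; rewrite neq_ltn ht orbT.
by rewrite IH ?subr0 ?addr0 //; exact: ltnW.
Qed.

Lemma game_before phi th :
  forall n t obs L Pa Ca, (t <= t0 < t + n)%N ->
  gameE Pr C phi th strat n t obs L Pa Ca =
  (\int[Pr th]_z (phi ((L + C t0) * f z) Pa (Ca + C t0))%:E)%E.
Proof.
elim=> [|n IH] t obs L Pa Ca /andP[h1 h2] /=.
  by move: h2; rewrite addn0 ltnNge h1.
case: eqP => [->|/eqP ne].
  apply: eq_integral => z _; rewrite game_after //.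
  by rewrite subr0 addr0.
rewrite IH ?subr0 ?addr0 //.
by rewrite ltn_neqAle ne h1 /= addSnnS.
Qed.

End Second.
End PB1.

Theorem propositionB1 (d : measure_display) (Z : measurableType d) (R : realType)
  (Theta : Type) (Theta0 : set Theta) (Pr : Theta -> probability Z R)
  (T : nat) (C : nat -> R) (F : nat -> set (Z -> R))
  (hT : (1 <= T)%N)
  (hC : forall t, (1 <= t <= T)%N -> 0 < C t)
  (hF : forall t, (1 <= t <= T)%N -> forall f, F t f ->
          measurable_fun setT f /\ forall z, 0 <= f z) :
  ((forall t, (1 <= t <= T)%N -> F t `<=` evalue Theta0 Pr) ->
     forall th0, Theta0 th0 -> forall S : strategy Z R,
       admissible C F T S -> (expected_gain Pr C T th0 S <= 0)%E)
  /\
  ((exists t, (1 <= t <= T)%N /\ ~ (F t `<=` evalue Theta0 Pr)) ->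
     exists th0, Theta0 th0 /\ exists S : strategy Z R,
       admissible C F T S /\ (0 < expected_gain Pr C T th0 S)%E).
Proof.
split.
- move=> hE th0 th00 S [mS hf].
  have hg : @goodC _ _ _ _ Pr C F th0 T 1.
    move=> s /andP[s1 sT]; rewrite add1n ltnS in sT.
    have hs : (1 <= s <= T)%N by rewrite s1 sT.
    split; first exact: hC.
    move=> f Ff; have [mf f0 fi] := hE s hs f Ff.
    by split => //; exact: fi.
  have := @main_ineq d Z R Theta Pr C F th0 S mS T 1 [::] 0 0 0 hg hf (lexx _) (lexx _) (lexx _).
  rewrite adde0 addr0 adde0 => H.
  by rewrite /expected_gain sube_le0.
- move=> [t0 [ht0 nsub]].
  have [f [Ff nf]] : exists f, F t0 f /\ ~ evalue Theta0 Pr f.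
    apply: contrapT => H; apply: nsub => f Ff; apply: contrapT => nf.
    by apply: H; exists f.
  have [mf f0] := hF t0 ht0 f Ff.
  have [th [th0 hth]] : exists th, Theta0 th /\ ~ (\int[Pr th]_z (f z)%:E <= 1)%E.
    apply: contrapT => H; apply: nf; split => // th th0.
    by apply: contrapT => nle; apply: H; exists th.
  have Ct0 := hC t0 ht0.
  exists th; split => //; exists (@strat _ Z R t0 f); split.
    split.
      move=> t k; split.
      + exact: measurable_cst.
      + exact: measurable_cst.
      + exact: measurableT_comp mf measurable_snd.
    apply: feas_strat => //; first lra.
  have hr : (1 <= t0 < 1 + T)%N by move: ht0 => /andP[-> h]; rewrite add1n ltnS.
  rewrite /expected_gain !(@game_before d Z R Theta Pr C t0 f _ th T 1 [::] 0 0 0 hr).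
  set c := C t0.
  have -> : (\int[Pr th]_z ((0 + c)%:E) = c%:E)%E.
    rewrite (_ : (\int[Pr th]_z (0 + c)%:E = \int[Pr th]_z cst (0 + c)%:E z)%E) //.
    rewrite integral_cst //.
    rewrite [X in (_ * X)%E](_ : _ = 1%E) ?mule1 ?add0r //; exact: probability_setT.
  have -> : (\int[Pr th]_z ((0 + c) * f z + 0)%:E = c%:E * \int[Pr th]_z (f z)%:E)%E.
    have q1 : forall z, setT z -> (0 <= (f z)%:E)%E by move=> z _; rewrite lee_fin.
    have q2 : measurable_fun setT (fun z => (f z)%:E) by exact/measurable_EFinP.
    have q3 : 0 <= c by rewrite /c; lra.
    rewrite -ge0_integralZl_EFin //.
    by apply: eq_integral => z _; rewrite add0r addr0 EFinM.
  have hth2 : (1 < \int[Pr th]_z (f z)%:E)%E by rewrite ltNge; apply/negP.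
  move: hth2.
  move: (\int[Pr th]_z (f z)%:E)%E => [r| |] //.
  + rewrite lte_fin => r1; rewrite -EFinM -EFinB lte_fin.
    have : 0 < c * (r - 1) by apply: mulr_gt0; rewrite /c; lra.
    rewrite mulrBr mulr1; lra.
  + move=> _; rewrite muleC gt0_mulye.
    by rewrite addye // ltry.
    by rewrite lte_fin /c.
Qed.
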